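(* Let $G$ be a cubic graph and let $J_1,J_2,J_3$ be three joins of $G$. For $i\in\{0,1,2,3\}$ let $E_i$ be the set of edges of $G$ contained in precisely $i$ of the sets $J_1,J_2,J_3$, and let $G_c=G[E_0\cup E_2\cup E_3]$ be the weak core of $G$ with respect to $J_1,J_2,J_3$. Then $G[E_0\cup E_2]$ is either an empty graph or a cycle.
   Context: A join of a graph $H$ is a set $J\subseteq E(H)$ such that every vertex has degree of the same parity in $H$ and in the spanning subgraph $(V(H),J)$. For $X\subseteq E(G)$, $G[X]$ denotes the subgraph induced by the edge set $X$. A cycle is a graph in which every vertex has even degree (equivalently, here, a union of edge-disjoint circuits). *)

(* Defs.v *)
(* Finite multigraphs (parallel edges and loops allowed). *)
From mathcomp Require Import all_boot.
Set Implicit Arguments. Unset Strict Implicit. Unset Printing Implicit Defensive.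

Record graph := Graph {
  vertex : finType;
  edge : finType;
  ends : edge -> vertex * vertex }.

(* number of ends of e equal to v (a loop counts twice) *)
Definition inc (G : graph) (e : edge G) (v : vertex G) : nat :=
  ((ends e).1 == v) + ((ends e).2 == v).

Definition deg (G : graph) (F : {set edge G}) (v : vertex G) : nat :=
  \sum_(e in F) inc e v.

Definition cubic (G : graph) : Prop := forall v, deg [set: edge G] v = 3.

Definition is_join (G : graph) (J : {set edge G}) : Prop :=
  forall v, odd (deg J v) = odd (deg [set: edge G] v).

(* G[X] is a cycle: every vertex of G[X] has even degree; vertices of G
   not incident with X have degree 0 in (V,X), so we quantify over all V. *)
Definition is_cycle (G : graph) (X : {set edge G}) : Prop :=
  forall v, ~~ odd (deg X v).

Definition mult (G : graph) (J1 J2 J3 : {set edge G}) (e : edge G) : nat :=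
  (e \in J1) + (e \in J2) + (e \in J3).

Definition Ei (G : graph) (J1 J2 J3 : {set edge G}) (i : nat) : {set edge G} :=
  [set e | mult J1 J2 J3 e == i].

Definition weak_core (G : graph) (J1 J2 J3 : {set edge G}) : {set edge G} :=
  Ei J1 J2 J3 0 :|: Ei J1 J2 J3 2 :|: Ei J1 J2 J3 3.

(* Main.v *)
Require Import Defs.
From mathcomp Require Import all_boot.
From mathcomp Require Import zify.
From Stdlib Require Import Lia.

Lemma degE (G : graph) (F : {set edge G}) v :
  deg F v = \sum_e (e \in F) * inc e v.
Proof. by rewrite /deg big_mkcond /=; apply: eq_bigr => e _; case: (e \in F); rewrite ?mul1n ?mul0n. Qed.

Theorem proposition2p2 (G : graph) (J1 J2 J3 : {set edge G}) :
  cubic G -> is_join J1 -> is_join J2 -> is_join J3 ->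
  let X := Ei J1 J2 J3 0 :|: Ei J1 J2 J3 2 in
  X = set0 \/ is_cycle X.
Proof.
move=> cub j1 j2 j3 X; right => v.
have H : deg X v + deg [set: edge G] v + deg J1 v + deg J2 v + deg J3 v
   = \sum_e ((e \in X) + 1 + mult J1 J2 J3 e) * inc e v.
  rewrite !degE -!big_split /=; apply: eq_bigr => e _.
  rewrite in_setT /mult; rewrite !mulnDl; lia.
have D : 2 %| \sum_e ((e \in X) + 1 + mult J1 J2 J3 e) * inc e v.
  apply: dvdn_sum => e _; apply: dvdn_mulr.
  rewrite /X !inE /mult.
  case: (e \in J1); case: (e \in J2); case: (e \in J3) => //.
have := j1 v; have := j2 v; have := j3 v; rewrite cub => /= o3 o2 o1.
move: D; rewrite -H dvdn2 !oddD cub o1 o2 o3 /=.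
by case: (odd _).
Qed.
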